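(* For every $n\geq1$, the number of $\mathcal{B}_n$-orbits of right $0/1$-triangles in $[0,1]^n$ equals $\left\lfloor\frac{n}{2}\right\rfloor\left\lceil\frac{n}{2}\right\rceil$.
   Context: A $0/1$-triangle in $[0,1]^n$ is the convex hull of three distinct points of $\{0,1\}^n$; it is right if one of its angles equals $\pi/2$. $\mathcal{B}_n$ is the hyperoctahedral group of symmetries of $[0,1]^n$, acting on $\{0,1\}^n$ by permuting coordinates and complementing a subset of coordinates; triangles are counted up to this action. *)

(* Defs.v *)
From mathcomp Require Import all_boot all_order all_algebra fingroup perm.
Set Implicit Arguments. Unset Strict Implicit. Unset Printing Implicit Defensive.
Import GRing.Theory Num.Theory.

Notation point n := {ffun 'I_n -> bool}.

(* The hyperoctahedral group B_n acts on {0,1}^n: a coordinate permutation s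
   followed by complementing the coordinates in c. *)
Definition bact (n : nat) (s : {perm 'I_n}) (c : {set 'I_n}) (x : point n)
  : point n := [ffun i => addb (x ((s^-1)%g i)) (i \in c)].

(* A 0/1-triangle: the convex hull of three distinct 0/1 points; since all
   points of {0,1}^n are vertices of the cube, it is determined by its
   (3-element) vertex set. *)
Definition is_triangle (n : nat) (T : {set point n}) : bool := #|T| == 3.

Definition dotv (n : nat) (v a b : point n) : int :=
  \sum_(i < n) (((a i : nat)%:Z - (v i : nat)%:Z) * ((b i : nat)%:Z - (v i : nat)%:Z))%R.

Definition right_at (n : nat) (v a b : point n) : bool := dotv v a b == 0%R.

Definition is_right (n : nat) (T : {set point n}) : bool :=
  [exists v in T, exists a in T, exists b in T,
     [&& a != v, b != v, a != b & right_at v a b]].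

Definition right_triangles (n : nat) : {set {set point n}} :=
  [set T : {set point n} | is_triangle T && is_right T].

Definition borbit (n : nat) (T : {set point n}) : {set {set point n}} :=
  [set bact s c @: T | s : {perm 'I_n}, c : {set 'I_n}].

(* Main.v *)
Require Import Defs.
From mathcomp Require Import all_boot all_order all_algebra fingroup perm.
From mathcomp Require Import zify.
Set Implicit Arguments. Unset Strict Implicit. Unset Printing Implicit Defensive.
Import GRing.Theory Num.Theory.
Open Scope nat_scope.

Section Act.
Variable n : nat.
Implicit Types (s : {perm 'I_n}) (c : {set 'I_n}) (x y : point n) (T U W : {set point n}).

Lemma bact_comp s1 c1 s2 c2 x :
  bact s1 c1 (bact s2 c2 x) =
  bact (s2 * s1)%g [set i | (i \in c1) (+) ((s1^-1)%g i \in c2)] x.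
Proof.
apply/ffunP => i; rewrite !ffunE inE invMg permM.
by rewrite -addbA [(i \in c1) (+) _]addbC.
Qed.

Lemma bact_inv s c x :
  bact (s^-1)%g [set i | s i \in c] (bact s c x) = x.
Proof.
apply/ffunP => i; rewrite !ffunE inE invgK permK.
by rewrite -addbA addbb addbF.
Qed.

Lemma bact_inj s c : injective (bact s c).
Proof. exact: can_inj (bact_inv s c). Qed.

Lemma mem_borbit s c T : bact s c @: T \in borbit T.
Proof. by apply/imset2P; exists s c. Qed.

Lemma borbit_refl T : T \in borbit T.
Proof.
have E : T = bact 1%g set0 @: T.
  rewrite -[in LHS](imset_id T); apply: eq_imset => x.
  by apply/ffunP => i; rewrite ffunE invg1 perm1 inE addbF.
rewrite {1}E; exact: mem_borbit.
Qed.

Lemma borbit_trans T U W : U \in borbit T -> W \in borbit U -> W \in borbit T.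
Proof.
move=> /imset2P [s c _ _ ->] /imset2P [s' c' _ _ ->].
rewrite -imset_comp.
have -> : (bact s' c' \o bact s c) @: T =
   bact (s * s')%g [set i | (i \in c') (+) ((s'^-1)%g i \in c)] @: T.
  by apply: eq_imset => x; rewrite /= bact_comp.
exact: mem_borbit.
Qed.

Lemma borbit_sym T U : U \in borbit T -> T \in borbit U.
Proof.
move=> /imset2P [s c _ _ ->].
have E : T = (bact (s^-1)%g [set i | s i \in c] \o bact s c) @: T.
  rewrite -[in LHS](imset_id T); apply: eq_imset => x; by rewrite /= bact_inv.
rewrite {1}E imset_comp; exact: mem_borbit.
Qed.

Lemma borbit_eq T U : U \in borbit T -> borbit U = borbit T.
Proof.
move=> UT; apply/setP => W; apply/idP/idP => H.
  exact: borbit_trans UT H.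
exact: borbit_trans (borbit_sym UT) H.
Qed.

Definition hd x y := #|[set i | x i != y i]|.

Lemma hdC x y : hd x y = hd y x.
Proof. by rewrite /hd; apply: eq_card => i; rewrite !inE eq_sym. Qed.

Lemma hd_bact s c x y : hd (bact s c x) (bact s c y) = hd x y.
Proof.
rewrite /hd; transitivity #|(s^-1)%g @^-1: [set i | x i != y i]|;
  last exact: card_preimset (@perm_inj _ _).
apply: eq_card => i; rewrite !inE !ffunE.
by case: (x _); case: (y _); case: (i \in c).
Qed.

Definition isdist T d :=
  [exists x in T, exists y in T, (x != y) && (hd x y == d)].

Lemma isdist_bact s c T d : isdist T d -> isdist (bact s c @: T) d.
Proof.
move=> /exists_inP [x xT /exists_inP [y yT /andP [xy /eqP hxy]]].
apply/exists_inP; exists (bact s c x); first exact: imset_f.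
apply/exists_inP; exists (bact s c y); first exact: imset_f.
by rewrite (inj_eq (@bact_inj s c)) xy hd_bact hxy eqxx.
Qed.

Lemma isdist_borbit T U d : U \in borbit T -> isdist T d -> isdist U d.
Proof. by move=> /imset2P [s c _ _ ->]; apply: isdist_bact. Qed.

End Act.

Lemma term_eq (x y w : bool) :
  ((((x : nat)%:Z - (w : nat)%:Z) * ((y : nat)%:Z - (w : nat)%:Z))
  = (((x != w) && (y != w)) : nat)%:Z)%R.
Proof. by case: x; case: y; case: w. Qed.

Lemma right_atE n (v a b : point n) :
  right_at v a b = [forall i, ~~ ((a i != v i) && (b i != v i))].
Proof.
rewrite /right_at /dotv.
under eq_bigr do rewrite term_eq.
rewrite -(big_morph Posz PoszD (erefl (Posz 0))).
have -> : (Posz (\sum_(i < n) (((a i != v i) && (b i != v i)) : nat))%N == 0%R)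
   = ((\sum_(i < n) (((a i != v i) && (b i != v i)) : nat))%N == 0%N) by [].
rewrite sum_nat_eq0; apply: eq_forallb => i.
by case: (_ && _).
Qed.

Lemma count_range a b m : a <= b ->
  count (fun i => (a <= i) && (i < b)) (iota 0 m) = minn b m - minn a m.
Proof.
move=> ab; elim: m => [|m IH]; first by rewrite /= !minn0.
rewrite -addn1 iotaD count_cat IH /= addn0.
case: (leqP a m) => am /=; case: (ltnP m b) => mb /=; lia.
Qed.

Lemma card_range n a b : a <= b -> b <= n ->
  #|[set i : 'I_n | (a <= i) && (i < b)]| = b - a.
Proof.
move=> ab bn.
rewrite cardsE cardE /enum_mem size_filter /=.
rewrite -(count_map val (fun i => (a <= i) && (i < b))).
rewrite -enumT val_enum_ord count_range //; lia.
Qed.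

Lemma fneq b : (false != b) = b. Proof. by case: b. Qed.

Section Canon.
Variable n : nat.

Definition ind a b : point n := [ffun i : 'I_n => (a <= i) && (i < b)].
Definition Tc p q : {set point n} := [set ind 0 0; ind 0 p; ind p (p + q)].

Lemma hd0p p : p <= n -> hd (ind 0 0) (ind 0 p) = p.
Proof.
move=> pn; rewrite /hd -[RHS](subn0 p) -(card_range (n:=n)) //.
by apply: eq_card => i; rewrite !inE !ffunE /= ?ltn0 fneq.
Qed.

Lemma hd0q p q : p + q <= n -> hd (ind 0 0) (ind p (p + q)) = q.
Proof.
move=> pn; rewrite /hd -[RHS](addKn p q) -(card_range (n:=n)) //; last lia.
by apply: eq_card => i; rewrite !inE !ffunE /= ?ltn0 fneq.
Qed.

Lemma hdpq p q : p + q <= n -> hd (ind 0 p) (ind p (p + q)) = p + q.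
Proof.
move=> pn; rewrite /hd -[RHS](subn0 (p + q)) -(card_range (n:=n)) //.
apply: eq_card => i; rewrite !inE !ffunE /=.
case: (ltnP i p) => ip /=; first by rewrite ltn_addr.
by rewrite fneq.
Qed.

Lemma hd_refl (x : point n) : hd x x = 0.
Proof. by rewrite /hd; apply/eqP; rewrite cards_eq0; apply/eqP/setP => i; rewrite !inE eqxx. Qed.

Lemma hd_neq (x y : point n) : 0 < hd x y -> x != y.
Proof. by apply: contraTneq => ->; rewrite hd_refl. Qed.

Lemma Tc_dist p q d : 0 < p -> 0 < q -> p + q <= n ->
  isdist (Tc p q) d -> [\/ d = p, d = q | d = p + q].
Proof.
move=> p0 q0 pqn /exists_inP [x xT /exists_inP [y yT /andP [xy /eqP <-]]].
have h1 := hd0p (p:=p) ltac:(lia).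
have h2 := hd0q pqn. have h3 := hdpq pqn.
move: xT yT xy; rewrite !inE => /orP [/orP [/eqP ->|/eqP ->]|/eqP ->]
  /orP [/orP [/eqP ->|/eqP ->]|/eqP ->];
  rewrite ?eqxx // => _;
  rewrite ?h1 ?h2 ?h3 ?(hdC (ind 0 p)) ?(hdC (ind p (p + q))) ?h1 ?h2 ?h3;
  by [constructor 1 | constructor 2 | constructor 3].
Qed.

Lemma Tc_distp p q : 0 < p -> 0 < q -> p + q <= n -> isdist (Tc p q) p.
Proof.
move=> p0 q0 pqn; apply/exists_inP; exists (ind 0 0); first by rewrite !inE eqxx.
apply/exists_inP; exists (ind 0 p); first by rewrite !inE eqxx orbT.
rewrite hd0p ?eqxx ?andbT; last lia.
by apply: hd_neq; rewrite hd0p //; lia.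
Qed.

Lemma Tc_distpq p q : 0 < p -> 0 < q -> p + q <= n -> isdist (Tc p q) (p + q).
Proof.
move=> p0 q0 pqn; apply/exists_inP; exists (ind 0 p); first by rewrite !inE eqxx orbT.
apply/exists_inP; exists (ind p (p + q)); first by rewrite !inE eqxx !orbT.
rewrite hdpq ?eqxx ?andbT //.
by apply: hd_neq; rewrite hdpq //; lia.
Qed.

Lemma Tc_right p q : 0 < p -> 0 < q -> p + q <= n -> Tc p q \in right_triangles n.
Proof.
move=> p0 q0 pqn.
have n1 : ind 0 0 != ind 0 p by apply: hd_neq; rewrite hd0p //; lia.
have n2 : ind 0 0 != ind p (p + q) by apply: hd_neq; rewrite hd0q //; lia.
have n3 : ind 0 p != ind p (p + q) by apply: hd_neq; rewrite hdpq //; lia.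
rewrite inE; apply/andP; split.
  rewrite /is_triangle /Tc -setUA cardsU1 cards2 n3 !inE negb_or n1 n2 //.
apply/exists_inP; exists (ind 0 0); first by rewrite !inE eqxx.
apply/exists_inP; exists (ind 0 p); first by rewrite !inE eqxx orbT.
apply/exists_inP; exists (ind p (p + q)); first by rewrite !inE eqxx !orbT.
rewrite eq_sym n1 eq_sym n2 n3 /= right_atE; apply/forallP => i.
rewrite !ffunE /=; case: (ltnP i p) => //=; lia.
Qed.

Lemma Tc_inj p q p' q' : 0 < p -> 0 < q -> p + q <= n -> p <= q ->
  0 < p' -> 0 < q' -> p' + q' <= n -> p' <= q' ->
  borbit (Tc p q) = borbit (Tc p' q') -> p = p' /\ q = q'.
Proof.
move=> p0 q0 pqn pq p0' q0' pqn' pq' E.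
have H1 : Tc p q \in borbit (Tc p' q') by rewrite -E borbit_refl.
have H2 : Tc p' q' \in borbit (Tc p q) by rewrite E borbit_refl.
have a1 := Tc_dist p0' q0' pqn' (isdist_borbit H2 (Tc_distp p0 q0 pqn)).
have a2 := Tc_dist p0' q0' pqn' (isdist_borbit H2 (Tc_distpq p0 q0 pqn)).
have a3 := Tc_dist p0 q0 pqn (isdist_borbit H1 (Tc_distp p0' q0' pqn')).
have a4 := Tc_dist p0 q0 pqn (isdist_borbit H1 (Tc_distpq p0' q0' pqn')).
case: a1; case: a2; case: a3; case: a4; lia.
Qed.

End Canon.

Section Perm.
Variable n : nat.

Lemma perm_exists (A B : {set 'I_n}) : A :&: B = set0 ->
  exists s : {perm 'I_n}, forall j : 'I_n,
    (s j \in A) = (j < #|A|) /\ (s j \in B) = (#|A| <= j < #|A| + #|B|).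
Proof.
move=> AB.
have dAB x : x \in A -> x \in B = false.
  move=> xA; apply/negbTE/negP => xB.
  have : x \in A :&: B by rewrite inE xA xB.
  by rewrite AB inE.
set C := ~: (A :|: B).
set L := enum A ++ enum B ++ enum C.
have sL : size L = n.
  rewrite /L !size_cat -!cardE.
  have := cardsC (A :|: B); rewrite cardsU AB cards0 subn0 card_ord.
  rewrite /C; lia.
have uL : uniq L.
  rewrite /L !cat_uniq !enum_uniq /= andbT; apply/andP; split.
    apply/hasPn => x; rewrite mem_cat !mem_enum => /orP [xB|xC];
      apply/negP => xA.
      by rewrite dAB in xB.
    by move: xC; rewrite !inE xA.
  apply/hasPn => x; rewrite !mem_enum => xC; apply/negP => xB.
  by move: xC; rewrite !inE xB orbT.
have f_inj : injective (fun j : 'I_n => nth j L j).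
  move=> j k /= E; apply/val_inj => /=.
  move: E; rewrite (set_nth_default j k); last by rewrite sL.
  move/eqP; rewrite nth_uniq ?sL //; by move/eqP.
exists (perm f_inj) => j; rewrite permE.
have jn : (j : nat) < n := ltn_ord j.
move: sL; rewrite /L !size_cat => sL.
rewrite !cardE /L nth_cat.
case: (ltnP j (size (enum A))) => jA.
  have hx : nth j (enum A) j \in A by rewrite -mem_enum mem_nth.
  by rewrite hx dAB.
rewrite nth_cat.
case: (ltnP (j - size (enum A)) (size (enum B))) => jB.
  have hx : nth j (enum B) (j - size (enum A)) \in B by rewrite -mem_enum mem_nth.
  have jAB : j < size (enum A) + size (enum B) by lia.
  rewrite hx jAB; split => //; apply/negbTE/negP => xA; by rewrite dAB in hx.
have hx : nth j (enum C) (j - size (enum A) - size (enum B)) \in C.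
  have sC : j - size (enum A) - size (enum B) < size (enum C) by lia.
  rewrite -mem_enum; apply: mem_nth; exact: sC.
move: hx; rewrite !inE negb_or => /andP [/negbTE -> /negbTE ->].
have jAB : (j < size (enum A) + size (enum B)) = false.
  by apply/negbTE; rewrite -leqNgt; lia.
by rewrite jAB andbF.
Qed.

Lemma classify (T : {set point n}) : T \in right_triangles n ->
  exists p q, [/\ 0 < p, 0 < q, p + q <= n, p <= q & T \in borbit (Tc n p q)].
Proof.
rewrite inE => /andP [/eqP T3 /exists_inP [v vT /exists_inP [a aT
  /exists_inP [b bT /and4P [av bv ab rt]]]]].
move: rt; rewrite right_atE => /forallP rt.
have TE : T = [set v; a; b].
  apply/eqP; rewrite eq_sym eqEcard; apply/andP; split.
    apply/subsetP => x; rewrite !inE => /orP [/orP [/eqP ->|/eqP ->]|/eqP ->] //.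
  rewrite T3 -setUA cardsU1 cards2 ab !inE negb_or !(eq_sym v) av bv //.
have key : forall a b : point n, a != v -> b != v ->
    (forall i, ~~ ((a i != v i) && (b i != v i))) ->
    #|[set i | a i != v i]| <= #|[set i | b i != v i]| ->
    exists p q, [/\ 0 < p, 0 < q, p + q <= n, p <= q &
                    [set v; a; b] \in borbit (Tc n p q)].
  clear a b aT bT av bv ab rt TE => a b av bv rt pq.
  set A := [set i | a i != v i]; set B := [set i | b i != v i].
  have AB : A :&: B = set0.
    apply/setP => i; rewrite !inE; exact: negbTE (rt i).
  have pos x : x != v -> 0 < #|[set i | x i != v i]|.
    move=> xv; rewrite card_gt0; apply: contra xv => /eqP X0.
    apply/eqP/ffunP => i; apply/eqP/negPn.
    have : i \notin [set i | x i != v i] by rewrite X0 inE.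
    by rewrite inE.
  have pqn : #|A| + #|B| <= n.
    have := max_card (A :|: B); rewrite cardsU AB cards0 subn0 card_ord //.
  have [s hs] := perm_exists AB.
  exists #|A|, #|B|; split; [exact: pos | exact: pos | exact: pqn | exact: pq |].
  have hA i : (i \in A) = (s^-1 i < #|A|)%g.
    by have := proj1 (hs (s^-1 i)%g); rewrite permKV.
  have hB i : (i \in B) = (#|A| <= (s^-1)%g i < #|A| + #|B|).
    by have := proj2 (hs (s^-1 i)%g); rewrite permKV.
  set c := [set i | v i].
  have -> : [set v; a; b] = bact s c @: Tc n #|A| #|B|.
    rewrite /Tc imsetU imsetU1 !imset_set1.
    have -> : bact s c (ind n 0 0) = v.
      by apply/ffunP => i; rewrite /bact !ffunE /c inE /=.
    have -> : bact s c (ind n 0 #|A|) = a.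
      apply/ffunP => i; rewrite /bact !ffunE /c inE /= -hA inE.
      by case: (a i); case: (v i).
    have -> : bact s c (ind n #|A| (#|A| + #|B|)) = b.
      apply/ffunP => i; rewrite /bact !ffunE /c inE /= -hB inE.
      by case: (b i); case: (v i).
    by [].
  exact: mem_borbit.
rewrite TE.
case: (leqP #|[set i | a i != v i]| #|[set i | b i != v i]|) => h.
  exact: key.
rewrite setUAC; apply: key => // [i|]; last exact: ltnW.
by rewrite andbC.
Qed.

End Perm.

Theorem corollary4p19 (n : nat) :
  1 <= n ->
  #|[set borbit T | T in right_triangles n]| = (n %/ 2) * ((n + 1) %/ 2).
Proof.
move=> n1.
set k := n %/ 2; set l := (n + 1) %/ 2.
have kl : k + l = n /\ k <= l <= k + 1 by rewrite /k /l; lia.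
case: kl => kln /andP [kl1 kl2].
pose phi (ij : 'I_k * 'I_l) : nat * nat :=
  if (ij.1 : nat) <= ij.2 then (ij.1.+1, ij.2.+1) else (ij.2.+1, l + ij.1 - ij.2).
have phiv ij : [/\ 0 < (phi ij).1, 0 < (phi ij).2, (phi ij).1 + (phi ij).2 <= n
                 & (phi ij).1 <= (phi ij).2].
  case: ij => [[i ik] [j jl]]; rewrite /phi /=.
  case: (leqP i j) => h /=; split; lia.
pose G ij := borbit (Tc n (phi ij).1 (phi ij).2).
have Ginj : injective G.
  move=> ij ij' E.
  have [a1 a2 a3 a4] := phiv ij; have [b1 b2 b3 b4] := phiv ij'.
  have [e1 e2] := Tc_inj a1 a2 a3 a4 b1 b2 b3 b4 E.
  clear E a1 a2 a3 a4 b1 b2 b3 b4; move: e1 e2; case: ij => [[i ik] [j jl]]; case: ij' => [[i' ik'] [j' jl']].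
  rewrite /phi /= => e1 e2.
  have [ei ej] : i = i' /\ j = j'.
    move: e1 e2; case: (leqP i j) => h1; case: (leqP i' j') => h2 /= e1 e2; lia.
  subst i' j'.
  by congr pair; apply/val_inj.
have -> : [set borbit T | T in right_triangles n] = [set G ij | ij : 'I_k * 'I_l].
  apply/setP => O; apply/imsetP/imsetP.
    move=> [T TR ->].
    have [p [q [p0 q0 pqn pq TO]]] := classify TR.
    rewrite (borbit_eq TO).
    have [ij phij] : exists ij, phi ij = (p, q).
      case: (leqP q l) => ql.
        have ik : p.-1 < k by lia.
        have jl : q.-1 < l by lia.
        exists (Ordinal ik, Ordinal jl); rewrite /phi /=.
        case: (leqP p.-1 q.-1) => h; [congr pair; lia | lia].
      have ik : q - l + p.-1 < k by lia.
      have jl : p.-1 < l by lia.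
      exists (Ordinal ik, Ordinal jl); rewrite /phi /=.
      case: (leqP (q - l + p.-1) p.-1) => h; [lia | congr pair; lia].
    exists ij => //; by rewrite /G phij.
  move=> [ij _ ->].
  have [a1 a2 a3 a4] := phiv ij.
  exists (Tc n (phi ij).1 (phi ij).2) => //.
  exact: Tc_right.
rewrite card_imset //= card_prod !card_ord.
by [].
Qed.
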